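(* Let $\Delta$ be a finite abstract simplicial complex of dimension $d\ge0$ and $\Delta^{(k)}$ its $k$-fold iterated barycentric subdivision. For each $0\le i\le d$ there are rational numbers $C_{j,i}$ ($0\le j\le d-i$), independent of $k$, such that for all $k\ge0$ $$f^{\Delta^{(k)}}_i=\sum_{j=0}^{d-i}C_{j,i}\,(d+1-j)!^k,$$ and $C_{0,i}=f^\Delta_dF_{i,d}$. Consequently $f^{\Delta^{(k)}}_i=f^\Delta_dF_{i,d}(d+1)!^k+O(d!^k)$ as $k\to\infty$.
   Context: An abstract simplicial complex $\Delta$ on a finite set is a family of subsets closed under taking subsets (the empty set included); a $d$-simplex is a member of cardinality $d+1$, and $\dim\Delta$ is the largest such $d$. $f^\Delta_i$ denotes the number of $i$-simplices. The barycentric subdivision $\Delta'$ is the complex consisting of $\emptyset$ together with all sets $\{\sigma_0,\dots,\sigma_n\}$ ($n\ge0$) of nonempty simplices of $\Delta$ with $\sigma_0\subsetneq\cdots\subsetneq\sigma_n$; $\Delta^{(0)}=\Delta$, $\Delta^{(k+1)}=(\Delta^{(k)})'$. For integers $i,d\ge -1$ define $f_{-1,-1}=1$, $f_{-1,d}=0$ for $d\ge0$, $f_{i,-1}=0$ for $i\ge0$, and $f_{i,d}=(i+1)!\,S(d+1,i+1)$ for $i,d\ge0$ ($S$ = Stirling numbers of the second kind). For $d\ge0$ define $F_{d,d}=1$ and recursively for $-1\le i\le d-1$, $F_{i,d}=\frac{1}{(d+1)!-(i+1)!}\sum_{j=i+1}^{d}f_{i,j}F_{j,d}$. *)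

(* Defs.v *)
From HB Require Import structures.
From mathcomp Require Import all_boot all_order all_algebra.
Set Implicit Arguments. Unset Strict Implicit. Unset Printing Implicit Defensive.
Import Order.TTheory GRing.Theory Num.Theory.

Definition is_complex (T : finType) (D : {set {set T}}) : bool :=
  (set0 \in D) && [forall s in D, forall t : {set T}, (t \subset s) ==> (t \in D)].

Definition fnum (T : finType) (D : {set {set T}}) (i : nat) : nat :=
  #|[set s in D | #|s| == i.+1]|.

Definition complex_dim (T : finType) (D : {set {set T}}) (d : nat) : bool :=
  [exists s in D, #|s| == d.+1] && [forall s in D, #|s| <= d.+1].

(* barycentric subdivision: the empty set together with all nonempty chains
   s_0 ⊊ ... ⊊ s_n of nonempty simplices; equivalently all sets of nonempty
   simplices that are totally ordered by inclusion (the empty set of simplices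
   is the empty simplex of D'). *)
Definition bary (T : finType) (D : {set {set T}}) : {set {set {set T}}} :=
  [set c : {set {set T}} | (c \subset D :\ set0) &&
     [forall s in c, forall t in c, (s \subset t) || (t \subset s)]].

(* vertex type of the k-th iterated subdivision *)
Fixpoint itset (T : finType) (k : nat) : finType :=
  if k is k'.+1 then ({set itset T k'} : finType) else T.

Fixpoint sd (T : finType) (D : {set {set T}}) (k : nat) : {set {set itset T k}} :=
  match k return {set {set itset T k}} with
  | 0 => D
  | k'.+1 => bary (sd D k')
  end.

Fixpoint stirling2 (n k : nat) : nat :=
  match n, k with
  | 0, 0 => 1
  | 0, _.+1 => 0
  | _.+1, 0 => 0
  | n'.+1, k'.+1 => k'.+1 * stirling2 n' k'.+1 + stirling2 n' k'
  end.

Definition fid (i d : nat) : nat := (i.+1)`! * stirling2 d.+1 i.+1.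

Local Open Scope ring_scope.

(* Ftab n d = [:: F_{d-n,d}; F_{d-n+1,d}; ...; F_{d,d}]  (for n <= d) *)
Fixpoint Ftab (n d : nat) : seq rat :=
  match n with
  | 0 => [:: 1]
  | n'.+1 =>
      let s := Ftab n' d in
      let i := (d - n'.+1)%N in
      ((((d.+1)`!)%:R - ((i.+1)`!)%:R)^-1 *
        \sum_(m < n'.+1) (fid i (i.+1 + m)%N)%:R * nth 0 s m) :: s
  end.

Definition Fcoef (i d : nat) : rat := head 0 (Ftab (d - i) d).

(* Main.v *)
Require Import Defs.
From HB Require Import structures.
From mathcomp Require Import all_boot all_order all_algebra.
From mathcomp Require Import zify ring lra.
Import Order.TTheory GRing.Theory Num.Theory.
Set Implicit Arguments. Unset Strict Implicit. Unset Printing Implicit Defensive.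

Lemma stir0n n : stirling2 n.+1 0 = 0. Proof. by []. Qed.

Lemma stir_small n k : n < k -> stirling2 n k = 0.
Proof.
elim: n k => [|n IH] [|k] //= H.
rewrite !IH ?muln0 //; exact: ltnW.
Qed.

Lemma stir_nn n : stirling2 n n = 1.
Proof. elim: n => [|n IH] //=; by rewrite stir_small // muln0 IH. Qed.

Lemma stir_n1 n : stirling2 n.+1 1 = 1.
Proof. elim: n => [|n IH] //. change (1 * stirling2 n.+1 1 + stirling2 n.+1 0 = 1); by rewrite mul1n IH. Qed.

Lemma pascal_sum n (F : nat -> nat) :
  \sum_(m < n.+2) 'C(n.+1, m) * F m = \sum_(m < n.+1) 'C(n, m) * (F m + F m.+1).
Proof.
rewrite big_ord_recl bin0 mul1n.
rewrite (eq_bigr (fun m : 'I_n.+1 => 'C(n, m.+1) * F m.+1 + 'C(n, m) * F m.+1));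
  last by move=> m _; rewrite binS mulnDl.
rewrite big_split /= addnA.
have -> : F 0 + \sum_(i < n.+1) 'C(n, i.+1) * F i.+1 = \sum_(m < n.+1) 'C(n, m) * F m.
  rewrite -[F 0]mul1n -(bin0 n) -(big_ord_recl n.+1 (fun m => 'C(n, m) * F m)).
  by rewrite big_ord_recr /= bin_small ?mul0n ?addn0.
by rewrite -big_split /=; apply: eq_bigr => m _; rewrite mulnDr.
Qed.

Lemma stir_sum n k : stirling2 n.+1 k.+1 = \sum_(m < n.+1) 'C(n, m) * stirling2 m k.
Proof.
elim: n k => [|n IH] k.
  rewrite big_ord1 bin0 mul1n; case: k => [|k] //=; by rewrite muln0.
rewrite (pascal_sum n (fun m => stirling2 m k)).
case: k => [|k].
  change (1 * stirling2 n.+1 1 + stirling2 n.+1 0 = \sum_(m < n.+1) 'C(n, m) * (stirling2 m 0 + stirling2 m.+1 0)). rewrite mul1n IH addn0; apply: eq_bigr => m _; by rewrite addn0.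
rewrite -[LHS]/(k.+2 * stirling2 n.+1 k.+2 + stirling2 n.+1 k.+1) !IH big_distrr -big_split /=; apply: eq_bigr => m _.
nia.
Qed.

Lemma stir_sum2 n k : k.+1 * stirling2 n k.+1 = \sum_(m < n) 'C(n, m) * stirling2 m k.
Proof.
case: n => [|n]; first by rewrite big_ord0 /= muln0.
have := stir_sum n.+1 k; rewrite big_ord_recr /= binn mul1n.
move=> H.
exact: addIn H.
Qed.

Lemma pick_sum N x (G : nat -> nat) : x < N -> \sum_(m < N) (x == m) * G m = G x.
Proof.
move=> xN; rewrite (bigD1 (Ordinal xN)) //= eqxx mul1n big1 ?addn0 //.
move=> m hm; have -> : (x == m) = false; last by rewrite mul0n.
apply/negbTE; apply: contra hm => /eqP hx; apply/eqP/val_inj; by rewrite /= hx.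
Qed.

Lemma group_card (U : finType) (P : pred U) (g : U -> nat) (N : nat) (F : nat -> nat) :
  (forall t, P t -> g t < N) ->
  \sum_(t | P t) F (g t) = \sum_(m < N) #|[set t | P t & g t == m]| * F m.
Proof.
move=> H.
transitivity (\sum_(t | P t) \sum_(m < N) (g t == m) * F m).
  by apply: eq_bigr => t Pt; rewrite pick_sum // H.
rewrite exchange_big; apply: eq_bigr => m _.
rewrite -big_distrl /=; congr (_ * _).
rewrite -sum1_card big_mkcond [RHS]big_mkcond /=; apply: eq_bigr => t _.
by rewrite inE; case: (P t); case: (g t == m).
Qed.

Definition isch (T : finType) (c : {set {set T}}) : bool :=
  [forall s in c, forall t in c, (s \subset t) || (t \subset s)].
Definition istop (T : finType) (s : {set T}) (c : {set {set T}}) : bool :=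
  (s \in c) && [forall u in c, u \subset s].
Definition tch (T : finType) (s : {set T}) n :=
  [set c : {set {set T}} | [&& isch c, set0 \notin c, istop s c & #|c| == n]].

Lemma ischP (T : finType) (c : {set {set T}}) :
  reflect (forall u v, u \in c -> v \in c -> (u \subset v) || (v \subset u)) (isch c).
Proof.
apply: (iffP forallP) => H.
  move=> u v uc vc; move: (H u); rewrite uc /= => /forallP /(_ v); by rewrite vc.
move=> u; apply/implyP => uc; apply/forallP => v; apply/implyP => vc; exact: H.
Qed.

Lemma istopP (T : finType) (s : {set T}) (c : {set {set T}}) :
  reflect (s \in c /\ forall u, u \in c -> u \subset s) (istop s c).
Proof.
apply: (iffP andP) => [[sc /forallP H]|[sc H]]; split => //.
  by move=> u uc; move: (H u); rewrite uc.
by apply/forallP => u; apply/implyP; apply: H.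
Qed.

Lemma top_ex (T : finType) (c : {set {set T}}) : isch c -> c != set0 -> exists s, istop s c.
Proof.
move=> /ischP ch /set0Pn [u0 u0c].
case: (arg_maxnP (fun u : {set T} => #|u|) u0c) => s sc smax.
exists s; apply/istopP; split => // u uc.
case/orP: (ch u s uc sc) => // su.
have /eqP -> // : s == u by rewrite eqEcard su; exact: (smax u uc).
Qed.

Lemma top_uniq (T : finType) (s t : {set T}) (c : {set {set T}}) : istop s c -> istop t c -> s = t.
Proof.
move=> /istopP [sc Hs] /istopP [tc Ht]; apply/eqP; rewrite eqEsubset.
by rewrite Ht // Hs.
Qed.

Lemma top_decomp (T : finType) (X : {set {set {set T}}}) :
  (forall c, c \in X -> isch c /\ c != set0) ->
  #|X| = \sum_(s : {set T}) #|[set c in X | istop s c]|.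
Proof.
move=> HX.
transitivity (\sum_(c in X) \sum_(s : {set T}) (istop s c : nat)).
  rewrite -sum1_card; apply: eq_bigr => c cX.
  have [ch cn] := HX c cX; have [s st] := top_ex ch cn.
  rewrite (bigD1 s) //= st big1 // => t ts.
  case tt: (istop t c) => //; case/eqP: ts; exact: top_uniq tt st.
rewrite exchange_big; apply: eq_bigr => s _.
rewrite -sum1_card big_mkcond [RHS]big_mkcond /=; apply: eq_bigr => c _.
by rewrite inE; case: (c \in X); case: (istop s c).
Qed.

Lemma complex_sub (T : finType) (D : {set {set T}}) (s t : {set T}) :
  is_complex D -> s \in D -> t \subset s -> t \in D.
Proof.
case/andP => _ /forallP H sD ts; move: (H s); rewrite sD /= => /forallP /(_ t).
by rewrite ts.
Qed.

Lemma bary_count (T : finType) (D : {set {set T}}) i : is_complex D ->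
  fnum (bary D) i = \sum_(s | (s \in D) && (s != set0)) #|tch s i.+1|.
Proof.
move=> cD.
rewrite /fnum (top_decomp (X := [set c in bary D | #|c| == i.+1])); last first.
  move=> c; rewrite !inE => /andP [/andP [_ ch] cc]; split => //.
  by apply/eqP => c0; move: cc; rewrite c0 cards0.
rewrite (bigID (fun s => (s \in D) && (s != set0))) /= [X in _ + X]big1 ?addn0.
  apply: eq_bigr => s /andP [sD s0]; apply: eq_card => c; rewrite !inE.
  apply/idP/idP.
    case/andP => /andP [/andP [cs ch] cc] st; rewrite /isch ch st cc /= andbT.
    apply/negP => c0; move: (subsetP cs _ c0); by rewrite !inE eqxx.
  case/and4P => ch c0 st cc; rewrite -/(isch c) ch st cc !andbT /=.
  apply/subsetP => u uc; rewrite !inE; move/istopP: st => [_ Hs].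
  rewrite (complex_sub cD sD (Hs u uc)) andbT.
  by apply: contraNneq c0 => <-.
move=> s hs; apply/eqP; rewrite cards_eq0; apply/eqP/setP => c; rewrite !inE.
apply/negP => /andP [/andP [/andP [cs _] _] /istopP [sc _]].
move: (subsetP cs _ sc); rewrite !inE => /andP [a b]; move: hs; by rewrite a b.
Qed.

Definition Ych (T : finType) (s : {set T}) n :=
  [set c : {set {set T}} | [&& isch c, set0 \notin c, s \notin c,
     [forall u in c, u \subset s] & #|c| == n]].

Lemma isch_sub (T : finType) (c c' : {set {set T}}) : c' \subset c -> isch c -> isch c'.
Proof.
move=> sc /ischP H; apply/ischP => u v uc vc; apply: H; exact: (subsetP sc).
Qed.

Lemma tch_Y (T : finType) (s : {set T}) n : #|tch s n.+2| = #|Ych s n.+1|.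
Proof.
have -> : tch s n.+2 = [set s |: c | c in Ych s n.+1].
  apply/setP => c; apply/idP/imsetP.
    rewrite inE => /and4P [ch c0 /istopP [sc Hs] cc].
    exists (c :\ s); last by rewrite setD1K.
    rewrite inE (isch_sub (subD1set c s) ch) /= !inE eqxx /=.
    rewrite (negbTE c0) andbF /=.
    rewrite (cardsD1 s c) sc in cc; rewrite -(eqn_add2l 1) cc andbT.
    apply/forallP => u; apply/implyP; rewrite !inE => /andP [_ uc]; exact: Hs.
  case=> c'; rewrite inE => /and5P [ch c0 sc' /forallP Hs cc] ->.
  have Hs' : forall u, u \in c' -> u \subset s by move=> u uc; move: (Hs u); rewrite uc.
  have s0 : s != set0.
    have /set0Pn [u uc] : c' != set0 by apply/eqP => e; move: cc; rewrite e cards0.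
    apply/negP => /eqP e; move: (Hs' u uc); rewrite e subset0 => /eqP u0.
    by move: c0; rewrite -u0 uc.
  rewrite inE; apply/and4P; split.
  - apply/ischP => u v; rewrite !inE => /orP [/eqP ->|uc] /orP [/eqP ->|vc].
    + by rewrite subxx.
    + by rewrite Hs' ?orbT.
    + by rewrite Hs'.
    + exact: (ischP _ ch).
  - by rewrite !inE negb_or eq_sym s0.
  - apply/istopP; split; first by rewrite !inE eqxx.
    by move=> u; rewrite !inE => /orP [/eqP ->|uc]; [rewrite subxx | exact: Hs'].
  - by rewrite cardsU1 sc' (eqP cc).
apply: card_in_imset => c1 c2; rewrite !inE => /and5P [_ _ s1 _ _] /and5P [_ _ s2 _ _] e.
by rewrite -(setU1K s1) -(setU1K s2) e.
Qed.

Lemma tch_card (T : finType) (s : {set T}) i :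
  #|tch s i.+1| = (i.+1)`! * stirling2 #|s| i.+1.
Proof.
elim: i s => [|i IH] s.
  case: (eqVneq s set0) => [->|s0].
    rewrite cards0 muln0; apply/eqP; rewrite cards_eq0; apply/eqP/setP => c.
    rewrite !inE; apply/negP => /and4P [_ c0 /istopP [sc _] _]; by rewrite sc in c0.
  have -> : tch s 1 = [set [set s]].
    apply/setP => c; rewrite !inE; apply/idP/idP.
      case/and4P => _ _ /istopP [sc _] /cards1P [x e]; move: sc; rewrite e inE => /eqP ->.
      done.
    move/eqP => ->; rewrite cards1 eqxx andbT; apply/and3P; split.
    - by apply/ischP => u v; rewrite !inE => /eqP -> /eqP ->; rewrite subxx.
    - by rewrite inE eq_sym.
    - by apply/istopP; split; [rewrite inE | move=> u; rewrite inE => /eqP ->].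
  rewrite cards1; have : 0 < #|s| by rewrite card_gt0.
  by case: #|s| => // n _; rewrite stir_n1.
rewrite tch_Y (top_decomp (X := Ych s i.+1)); last first.
  move=> c; rewrite inE => /and5P [ch _ _ _ cc]; split => //.
  by apply/eqP => e; move: cc; rewrite e cards0.
rewrite [LHS](bigID (fun t : {set T} => t \proper s)) /= [X in _ + X]big1 ?addn0; last first.
  move=> t ts; apply/eqP; rewrite cards_eq0; apply/eqP/setP => c; rewrite !inE.
  apply/negP => /andP [/and5P [_ _ sc /forallP Hs _] /istopP [tc _]].
  move: (Hs t); rewrite tc /= => tss; move: ts; rewrite properEneq tss andbT negbK.
  by move/eqP => e; rewrite -e tc in sc.
rewrite (eq_bigr (fun t : {set T} => (i.+1)`! * stirling2 #|t| i.+1)); last first.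
  move=> t ts; rewrite -IH; apply: eq_card => c; rewrite !inE.
  apply/idP/idP.
    case/andP => /and5P [ch c0 _ _ cc] tt; by rewrite ch c0 tt cc.
  case/and4P => ch c0 tt cc; rewrite ch c0 tt cc andbT /=.
  move/istopP: tt => [tc Ht]; apply/andP; split.
    apply: contraL ts => sc; move: (Ht s sc) => st.
    by rewrite properE st andbF.
  rewrite andbT; apply/forallP => u; apply/implyP => uc; apply: subset_trans (Ht u uc) _.
  exact: proper_sub ts.
rewrite (group_card (P := fun t : {set T} => t \proper s) (g := fun t => #|t|) (N := #|s|)
   (fun m => (i.+1)`! * stirling2 m i.+1)); last by move=> t ts; exact: proper_card.
rewrite (factS i.+1) [(i.+2 * _)%N]mulnC -mulnA stir_sum2 big_distrr /=; apply: eq_bigr => m _.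
have -> : #|[set t : {set T} | t \proper s & #|t| == m]| = 'C(#|s|, m).
  rewrite -cards_draws; apply: eq_card => t; rewrite !inE properEcard.
  case: (eqVneq #|t| m) => [->|]; by rewrite ?ltn_ord ?andbF ?andbT.
by rewrite mulnCA.
Qed.

Definition bounded (T : finType) (D : {set {set T}}) d := [forall s in D, #|s| <= d.+1].

Lemma boundedP (T : finType) (D : {set {set T}}) d :
  bounded D d -> forall s, s \in D -> #|s| <= d.+1.
Proof. move=> /forallP H s sD; move: (H s); by rewrite sD. Qed.

Lemma bary_rec (T : finType) (D : {set {set T}}) d i :
  is_complex D -> bounded D d ->
  fnum (bary D) i = \sum_(m < d.+1) fid i m * fnum D m.
Proof.
move=> cD bD.
rewrite bary_count // (eq_bigr (fun s : {set T} => fid i #|s|.-1)); last first.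
  move=> s /andP [_ s0]; rewrite tch_card /fid prednK // card_gt0 //.
rewrite (group_card (P := fun s : {set T} => (s \in D) && (s != set0))
   (g := fun s => #|s|.-1) (N := d.+1) (fid i)); last first.
  move=> s /andP [sD s0]; have := boundedP bD sD; have : 0 < #|s| by rewrite card_gt0.
  lia.
apply: eq_bigr => m _; rewrite mulnC; congr (_ * _); apply: eq_card => s.
rewrite !inE -card_gt0; case: (s \in D) => //=; by case: #|s|.
Qed.

Lemma bary_complex (T : finType) (D : {set {set T}}) : is_complex (bary D).
Proof.
apply/andP; split.
  rewrite inE sub0set /=; apply/forallP => u; by rewrite in_set0.
apply/forallP => c; apply/implyP; rewrite inE => /andP [cD ch].
apply/forallP => c'; apply/implyP => sc; rewrite inE (subset_trans sc cD) /=.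
exact: (isch_sub sc ch).
Qed.

Lemma bary_bounded (T : finType) (D : {set {set T}}) d :
  is_complex D -> bounded D d -> bounded (bary D) d.
Proof.
move=> cD bD; apply/forallP => c; apply/implyP => cB; rewrite leqNgt; apply/negP => big.
have : 0 < fnum (bary D) #|c|.-1.
  rewrite /fnum card_gt0; apply/set0Pn; exists c; rewrite inE cB /= prednK //.
  exact: leq_ltn_trans big.
rewrite (bary_rec _ cD bD) big1 // => m _.
rewrite /fid stir_small ?muln0 ?mul0n //.
have := ltn_ord m; move: big; lia.
Qed.

Lemma sd_props (T : finType) (D : {set {set T}}) d k :
  is_complex D -> bounded D d -> is_complex (sd D k) /\ bounded (sd D k) d.
Proof.
move=> cD bD; elim: k => [|k [c b]] //=; split; [exact: bary_complex | exact: bary_bounded].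
Qed.

Lemma sd_rec (T : finType) (D : {set {set T}}) d k i :
  is_complex D -> bounded D d ->
  fnum (sd D k.+1) i = \sum_(m < d.+1) fid i m * fnum (sd D k) m.
Proof.
move=> cD bD; have [c b] := sd_props k cD bD; exact: bary_rec.
Qed.


Local Open Scope ring_scope.

Lemma pick_sumR N x (G : nat -> rat) : (x < N)%N -> \sum_(m < N) (m == x :> nat)%:R * G m = G x.
Proof.
move=> xN; rewrite (bigD1 (Ordinal xN)) //= eqxx mul1r big1 ?addr0 //.
move=> m hm; have -> : (m == x :> nat) = false; last by rewrite mul0r.
apply/negbTE; apply: contra hm => /eqP hx; apply/eqP/val_inj; by rewrite /= hx.
Qed.

Lemma fact_lt a b : (0 < a)%N -> (a < b)%N -> (a`! < b`!)%N.
Proof.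
move=> a0; elim: b => [|b IH] //; rewrite ltnS leq_eqVlt => /orP [/eqP <-|ab].
  rewrite factS; have := fact_gt0 a; nia.
apply: (leq_trans (IH ab)); rewrite factS; have := fact_gt0 b; nia.
Qed.

Lemma fact_le a b : (a <= b)%N -> (a`! <= b`!)%N.
Proof.
elim: b => [|b IH]; first by rewrite leqn0 => /eqP ->.
rewrite leq_eqVlt => /orP [/eqP ->//|ab]; apply: (leq_trans (IH ab)).
rewrite factS; have := fact_gt0 b; nia.
Qed.

Lemma Ftab_nth n d m : (m <= n)%N -> nth 0 (Ftab n d) m = head 0 (Ftab (n - m) d).
Proof.
elim: n m => [|n IH] [|m] //= h; by rewrite IH.
Qed.

Definition mu d l : rat := ((d.+1 - l)`!)%:R.

Definition Prep d (f : nat -> nat -> rat) n (C : nat -> rat) :=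
  [/\ (forall l, (n < l)%N -> C l = 0),
      (forall k, f k (d - n)%N = \sum_(l < d.+1) C l * mu d l ^+ k) &
      C 0%N = f 0%N d * Fcoef (d - n) d].

Section Lin.
Variables (d : nat) (f : nat -> nat -> rat).
Hypothesis frec : forall k i, f k.+1 i = \sum_(m < d.+1) (fid i m)%:R * f k m.

Lemma fsplit k i : (i <= d)%N ->
  f k.+1 i = ((i.+1)`!)%:R * f k i + \sum_(m < d - i) (fid i (i.+1 + m))%:R * f k (i.+1 + m)%N.
Proof.
move=> id; rewrite frec -(big_mkord xpredT (fun m => (fid i m)%:R * f k m)).
rewrite (big_cat_nat (n := i)) //=; last by lia.
rewrite [X in X + _]big_nat_cond big1 ?add0r; last first.
  by move=> m /andP [/andP [_ hm] _]; rewrite /fid stir_small ?muln0 ?mul0r.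
rewrite big_ltn; last by lia.
rewrite /fid stir_nn muln1; congr (_ + _).
rewrite -{1}(add0n i.+1) big_addn big_mkord subSS.
by apply: eq_bigr => m _; rewrite addnC.
Qed.


Lemma rep_base : exists C, Prep d f 0 C.
Proof.
exists (fun l => (l == 0%N)%:R * f 0%N d); rewrite /Prep; split.
- by case=> [|l] //= _; rewrite mul0r.
- move=> k; rewrite subn0.
  rewrite (eq_bigr (fun l : 'I_d.+1 => (l == 0%N :> nat)%:R * (f 0%N d * mu d l ^+ k)));
    last by move=> l _; rewrite mulrA.
  rewrite (@pick_sumR _ _ (fun l => f 0%N d * mu d l ^+ k)) // /mu subn0.
  elim: k => [|k IH]; first by rewrite expr0 mulr1.
  by rewrite fsplit // subnn big_ord0 addr0 IH exprS; ring.
- by rewrite subn0 /Fcoef subnn /= mulr1 mul1r.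
Qed.

Lemma rep_step n (CC : 'I_n.+1 -> nat -> rat) : (n.+1 <= d)%N ->
  (forall x : 'I_n.+1, Prep d f x (CC x)) -> exists C, Prep d f n.+1 C.
Proof.
move=> nd HC.
set i := (d - n.+1)%N.
have ei : (d - i = n.+1)%N by rewrite /i; lia.
have Hf : forall k (m : 'I_n.+1), f k (i.+1 + m)%N = \sum_(l < d.+1) CC (rev_ord m) l * mu d l ^+ k.
  move=> k m; have [_ h _] := HC (rev_ord m); rewrite -h; congr f; rewrite /= /i.
  have := ltn_ord m; lia.
set B := fun l => \sum_(m < n.+1) (fid i (i.+1 + m))%:R * CC (rev_ord m) l.
have B0 : forall l, (n < l)%N -> B l = 0.
  move=> l nl; rewrite /B big1 // => m _.
  have [h _ _] := HC (rev_ord m); rewrite h ?mulr0 //=; have := ltn_ord m; lia.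
have Hg : forall k, f k.+1 i = ((i.+1)`!)%:R * f k i + \sum_(l < d.+1) B l * mu d l ^+ k.
  move=> k; rewrite fsplit; last by rewrite /i; lia.
  congr (_ + _); rewrite ei.
  rewrite (eq_bigr (fun m : 'I_n.+1 => \sum_(l < d.+1) (fid i (i.+1 + m))%:R * (CC (rev_ord m) l * mu d l ^+ k)));
    last by move=> m _; rewrite Hf big_distrr.
  rewrite exchange_big; apply: eq_bigr => l _; rewrite /B big_distrl /=.
  by apply: eq_bigr => m _; rewrite mulrA.
set lam : rat := ((i.+1)`!)%:R.
have mun : mu d n.+1 = lam by rewrite /mu /lam; congr (_ `!)%:R; rewrite /i; lia.
have mune : forall l, (l <= n)%N -> mu d l - lam != 0.
  move=> l ln; rewrite subr_eq0 /mu /lam eqr_nat; apply/negP => /eqP e.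
  have : ((i.+1)`! < (d.+1 - l)`!)%N by apply: fact_lt => //; rewrite /i; lia.
  by rewrite e ltnn.
set C0 := fun l : nat => if (l <= n)%N then B l / (mu d l - lam) else 0.
set X := f 0%N i - \sum_(l < d.+1) C0 l.
exists (fun l => C0 l + (l == n.+1)%:R * X); rewrite /Prep; split.
- move=> l nl; rewrite /C0; have -> : (l <= n)%N = false by lia.
  have -> : (l == n.+1) = false by lia.
  by rewrite mul0r addr0.
- rewrite -/i; elim => [|k IH].
    rewrite (eq_bigr (fun l : 'I_d.+1 => C0 l + (l == n.+1 :> nat)%:R * X)); last first.
      by move=> l _; rewrite expr0 mulr1.
    rewrite big_split /= (@pick_sumR _ _ (fun _ => X)); last by lia.
    by rewrite /X addrC subrK.
  rewrite Hg IH big_distrr -big_split /=; apply: eq_bigr => l _.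
  rewrite -/lam exprS; set c := (C0 l + _ * X).
  suff E : c * mu d l = lam * c + B l by rewrite [RHS]mulrA E; ring.
  rewrite /c; case: (ltnP n l) => ln.
    rewrite B0 // addr0 /C0; have -> : (l <= n)%N = false by lia.
    rewrite add0r; case: (eqVneq (l : nat) n.+1) => [e|ne].
      by rewrite e mun mul1r mulrC.
    by rewrite !mul0r mulr0.
  have -> : (l == n.+1 :> nat) = false by lia.
  rewrite mul0r !addr0 /C0 ln.
  move: (mune l ln); set mm := mu d l; move: (B l) => b hx.
  by field.
- rewrite /= /C0 leq0n mul0r addr0 /B /mu subn0 -/lam.
  rewrite /Fcoef /i subKn // /=.
  rewrite -/lam mulrC [RHS]mulrCA; congr (_ * _).
  rewrite big_distrr /=; apply: eq_bigr => m _.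
  have [_ _ h] := HC (rev_ord m); rewrite h Ftab_nth; last by have := ltn_ord m; lia.
  rewrite /Fcoef /= subKn; last by lia.
  have -> : (n.+1 - m.+1 = n - m)%N by lia.
  ring.
Qed.

Lemma rep_all n : (n <= d)%N -> exists C, Prep d f n C.
Proof.
have : forall n', (n' <= n)%N -> (n' <= d)%N -> exists C, Prep d f n' C; last first.
  by move=> H nd; exact: H.
elim: n => [|n IH] n' hn hd.
  by move: hn; rewrite leqn0 => /eqP ->; exact: rep_base.
case: (ltnP n' n.+1) => hn'; first by apply: IH.
have -> : n' = n.+1 by lia.
have nd : (n.+1 <= d)%N by lia.
have : forall x : 'I_n.+1, exists C, Prep d f x C.
  move=> x; apply: IH; [rewrite -ltnS; exact: ltn_ord | have := ltn_ord x; lia].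
case/fin_all_exists => CC HC; exact: rep_step HC.
Qed.

End Lin.

Lemma fin_nat_le a b k : (a <= b)%N -> (a%:R : rat) ^+ k <= (b%:R : rat) ^+ k.
Proof.
move=> ab; rewrite -!natrX ler_nat; case: k => [|k] //; by rewrite leq_exp2r.
Qed.

Theorem lemma2p8 (T : finType) (D : {set {set T}}) (d i : nat) :
  is_complex D -> complex_dim D d -> (i <= d)%N ->
  exists C : nat -> rat,
    (forall k : nat,
       ((fnum (sd D k) i)%:R : rat) =
         \sum_(j < (d - i).+1) C j * (((d.+1 - j)`!)%:R) ^+ k)
    /\ C 0%N = (fnum D d)%:R * Fcoef i d
    /\ (exists M : rat, forall k : nat,
          `|((fnum (sd D k) i)%:R : rat) - (fnum D d)%:R * Fcoef i d * ((d.+1)`!)%:R ^+ k|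
            <= M * ((d`!)%:R) ^+ k).
Proof.
move=> cD /andP [_ bD] id.
have bD' : bounded D d by [].
set f := fun k j => ((fnum (sd D k) j)%:R : rat).
have frec : forall k j, f k.+1 j = \sum_(m < d.+1) (fid j m)%:R * f k m.
  move=> k j; rewrite /f (sd_rec _ _ cD bD') natr_sum; apply: eq_bigr => m _.
  by rewrite natrM.
have [C [Cz Cf C0]] := rep_all frec (leq_subr i d).
rewrite subKn // in Cf C0.
have Cf' : forall k, f k i = \sum_(j < (d - i).+1) C j * (((d.+1 - j)`!)%:R) ^+ k.
  move=> k; rewrite Cf [RHS](@big_ord_widen _ _ _ (d - i).+1 d.+1 (fun j => C j * mu d j ^+ k)); last by lia.
  rewrite [RHS]big_mkcond /=; apply: eq_bigr => l _; case: ifP => // h.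
  by rewrite Cz ?mul0r //; lia.
exists C; split; first exact: Cf'.
split; first exact: C0.
exists (\sum_(j < d - i) `|C j.+1|) => k.
rewrite -/(f k i) Cf' big_ord_recl /= -C0 subn0 [C 0%N * _ + _]addrC addrK big_distrl /=.
apply: le_trans (ler_norm_sum _ _ _) _; apply: ler_sum => j _; rewrite /bump /= add1n.
rewrite normrM normrX normr_nat; apply: ler_wpM2l; first exact: normr_ge0.
apply: fin_nat_le; apply: fact_le; lia.
Qed.
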